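(* Let $F:\widehat{\gamma}_{\mathrm{par}}\to\widehat{\gamma}_{\mathrm{vir}}$ and $H:\widehat{\gamma}_{\mathrm{vir}}\to\widehat{\gamma}_{\mathrm{par}}$ be the saddle morphisms $F=\mathrm{id}_{K_{\mathrm{cmn}}}\otimes(R\otimes_{R_{\mathrm p}}F_{\mathrm p})$, $H=\mathrm{id}_{K_{\mathrm{cmn}}}\otimes(R\otimes_{R_{\mathrm p}}H_{\mathrm p})$, where $F_{\mathrm p}:\widehat{\gamma}_{\mathrm{par,p}}\to\widehat{\gamma}_{\mathrm{vir,p}}$ and $H_{\mathrm p}:\widehat{\gamma}_{\mathrm{vir,p}}\to\widehat{\gamma}_{\mathrm{par,p}}$ are both given on the even part by $\begin{pmatrix}0&1\\ q_2^2-q_1^2C&0\end{pmatrix}$ and on the odd part by $\begin{pmatrix}q_2&-q_1\\ q_1C&-q_2\end{pmatrix}$. Then, as endomorphisms of $\widehat{\gamma}_{\mathrm{par}}$, \[ H\circ F\simeq 2\,\hat y_1\hat y_2-2(2N+1)\sum_{i=0}^{2N}\hat x_1^{\,i}\,\hat x_2^{\,2N-i}, \] where $\hat x_k,\hat y_k$ denote multiplication by $x_k,y_k$ and $\simeq$ denotes homotopy.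
   Context: Fix $N\ge1$, $w(x)=x^{2N+1}$, $W(x,y)=xy^2+x^{2N+1}$, iterated divided differences $w(x_1,\dots,x_n)=\frac{w(x_1,\dots,x_{n-2},x_{n-1})-w(x_1,\dots,x_{n-2},x_n)}{x_{n-1}-x_n}$. $R=\mathbb{Q}[x_1,\dots,x_4,y_1,\dots,y_4]$, $\deg x_i=2$, $\deg y_i=2N$; $W_4=\sum W(x_i,y_i)$. Matrix factorizations of $V$: $\mathbb{Z}/2$-graded free modules with odd $D$, $D^2=V$; two morphisms are homotopic if their difference is $DX+XD$ for an odd $X$. $A(i,j)$ is the Koszul matrix factorization (tensor product over $R$ of $Re_0\oplus Re_1$, $De_0=b e_1$, $De_1=a e_0$ for each row $(a\mid b)$) with rows $(y_j+y_i\mid x_j(y_j-y_i))$, $(x_j+x_i\mid y_i^2+w(-x_i,x_j))$; $\widehat{\gamma}_{\mathrm{par}}=A(1,3)\otimes A(2,4)$, $\widehat{\gamma}_{\mathrm{vir}}=A(1,4)\otimes A(2,3)$. $R_{\mathrm p}=\mathbb{Q}[p_1,p_2,q_1,q_2,r_1,r_2,C]$, $W_{4,\mathrm p}=p_1q_2r_2+q_1p_2r_2+r_1p_2q_2+p_1q_1r_1C$. $\widehat{\gamma}_{\mathrm{par,p}}$: $R_{\mathrm p}^2$ (odd) $\xrightarrow{P}$ $R_{\mathrm p}^2$ (even) $\xrightarrow{Q}$ $R_{\mathrm p}^2$ (odd) with $P=\begin{pmatrix}p_2&p_1\\ q_2r_2+q_1r_1C&-(q_2r_1+q_1r_2)\end{pmatrix}$,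 $Q=\begin{pmatrix}q_1r_2+q_2r_1&p_1\\ q_2r_2+q_1r_1C&-p_2\end{pmatrix}$; $\widehat{\gamma}_{\mathrm{vir,p}}$: same shape with $P=\begin{pmatrix}r_2&r_1\\ p_2q_2+p_1q_1C&-(p_1q_2+p_2q_1)\end{pmatrix}$, $Q=\begin{pmatrix}p_1q_2+p_2q_1&r_1\\ p_2q_2+p_1q_1C&-r_2\end{pmatrix}$. $\phi_{\mathrm p}:R_{\mathrm p}\to R$: $p_1\mapsto x_2+x_4$, $q_1\mapsto x_3+x_4$, $r_1\mapsto x_1+x_4$, $p_2\mapsto y_2+y_4$, $q_2\mapsto y_3+y_4$, $r_2\mapsto y_1+y_4$, $C\mapsto w(x_1,x_2,-x_3,x_4)+w(x_1,-x_1,x_2,x_4)+w(x_1,-x_1,-x_2,x_4)$; $R\otimes_{R_{\mathrm p}}$ denotes base change along $\phi_{\mathrm p}$. $K_{\mathrm{cmn}}$ is the Koszul matrix factorization with rows $(x_1+x_2+x_3+x_4\mid A)$, $(y_1+y_2+y_3+y_4\mid B)$, $A=-(y_3+y_4)(y_1+y_2+y_4)-y_1y_2+w(-x_1,x_3)+(x_2+x_4)w(x_1,x_2,-x_3)-(x_2+x_4)(x_1+x_4)(w(x_1,-x_1,x_2,x_4)+w(x_1,-x_1,-x_2,x_4))$, $B=x_1y_1+x_2y_2+x_3y_3-x_4y_4$; $K_{\mathrm{cmn}}\otimes_R(R\otimes_{R_{\mathrm p}}\widehat{\gamma}_{\mathrm{par,p}})\cong\widehat{\gamma}_{\mathrm{par}}$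 and similarly for vir, and $F,H$ are regarded as morphisms between $\widehat{\gamma}_{\mathrm{par}}$ and $\widehat{\gamma}_{\mathrm{vir}}$ via these isomorphisms. *)

(* Defs.v *)
From HB Require Import structures.
From mathcomp Require Import all_boot all_order all_algebra.
From mathcomp Require Import mpoly.
Set Implicit Arguments.
Unset Strict Implicit.
Unset Printing Implicit Defensive.
Import GRing.Theory.
Local Open Scope ring_scope.

(* A module is given by finite index types of an even basis and an    *)
(* odd basis; a map is a matrix acting on column vectors:             *)
(* (m : J -> I -> T) sends basis vector i to \sum_j m j i * e_j.      *)
Section MF.
Variable T : comNzRingType.

Unset Implicit Arguments.
Record mf := MF {
  mf_ev : finType;
  mf_od : finType;
  mf_dE : mf_od -> mf_ev -> T;
  mf_dO : mf_ev -> mf_od -> T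
}.
Arguments MF {mf_ev mf_od}.
Set Implicit Arguments.


Definition mcomp (I J K : finType) (g : K -> J -> T) (f : J -> I -> T) : K -> I -> T :=
  fun k i => \sum_(j : J) g k j * f j i.

Record mor (M M' : mf) := Mor {
  morE : mf_ev M' -> mf_ev M -> T;
  morO : mf_od M' -> mf_od M -> T
}.

Definition mor_comp (M M' M'' : mf) (g : mor M' M'') (f : mor M M') : mor M M'' :=
  Mor (mcomp (morE g) (morE f)) (mcomp (morO g) (morO f)).

Definition mor_scal (M : mf) (c : T) : mor M M :=
  Mor (fun j i => if j == i then c else 0) (fun j i => if j == i then c else 0).

Definition homotopic (M M' : mf) (f g : mor M M') : Prop :=
  exists (X0 : mf_od M' -> mf_ev M -> T) (X1 : mf_ev M' -> mf_od M -> T),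
    (forall j i, morE f j i - morE g j i
                 = mcomp (mf_dO M') X0 j i + mcomp X1 (mf_dE M) j i) /\
    (forall j i, morO f j i - morO g j i
                 = mcomp (mf_dE M') X1 j i + mcomp X0 (mf_dO M) j i).

(* Tensor product (Koszul sign rule D(u(x)v) = Du(x)v + (-1)^|u| u(x)Dv). *)
Definition tens_ev (M N : mf) : finType :=
  ((mf_ev M * mf_ev N) + (mf_od M * mf_od N))%type.
Definition tens_od (M N : mf) : finType :=
  ((mf_ev M * mf_od N) + (mf_od M * mf_ev N))%type.

Definition ind (I : finType) (a b : I) : T := if a == b then 1 else 0.

Definition tens_dE (M N : mf) : tens_od M N -> tens_ev M N -> T :=
  fun t s => match t, s with
  | inl (a0, b1), inl (i0, j0) => ind a0 i0 * mf_dE N b1 j0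
  | inl (a0, b1), inr (i1, j1) => mf_dO M a0 i1 * ind b1 j1
  | inr (a1, b0), inl (i0, j0) => mf_dE M a1 i0 * ind b0 j0
  | inr (a1, b0), inr (i1, j1) => - (ind a1 i1 * mf_dO N b0 j1)
  end.

Definition tens_dO (M N : mf) : tens_ev M N -> tens_od M N -> T :=
  fun t s => match t, s with
  | inl (a0, b0), inl (i0, j1) => ind a0 i0 * mf_dO N b0 j1
  | inl (a0, b0), inr (i1, j0) => mf_dO M a0 i1 * ind b0 j0
  | inr (a1, b1), inl (i0, j1) => mf_dE M a1 i0 * ind b1 j1
  | inr (a1, b1), inr (i1, j0) => - (ind a1 i1 * mf_dE N b1 j0)
  end.

Definition tens (M N : mf) : mf := MF (@tens_dE M N) (@tens_dO M N).

Definition id_tens (M N N' : mf) (f : mor N N') : mor (tens M N) (tens M N') :=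
  @Mor (tens M N) (tens M N') (fun (t : tens_ev M N') (s : tens_ev M N) => match t, s with
       | inl (a, b), inl (i, j) => ind a i * morE f b j
       | inr (a, b), inr (i, j) => ind a i * morO f b j
       | _, _ => 0 end)
      (fun (t : tens_od M N') (s : tens_od M N) => match t, s with
       | inl (a, b), inl (i, j) => ind a i * morO f b j
       | inr (a, b), inr (i, j) => ind a i * morE f b j
       | _, _ => 0 end).

(* Koszul factorization of a single row (a | b): Re0 (even) + Re1 (odd),
   D e0 = b e1, D e1 = a e0 *)
Definition koszul1 (a b : T) : mf :=
  @MF unit unit (fun _ _ => b) (fun _ _ => a).

Definition m22 (a b c d : T) : 'I_2 -> 'I_2 -> T :=
  fun i j => if i == 0 :> nat then (if j == 0 :> nat then a else b)
             else (if j == 0 :> nat then c else d).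

(* R_p^2 (odd) --P--> R_p^2 (even) --Q--> R_p^2 (odd) *)
Definition mf22 (P Q : 'I_2 -> 'I_2 -> T) : mf := @MF 'I_2 'I_2 Q P.

End MF.
Arguments mf_ev {T}.
Arguments mf_od {T}.
Arguments mf_dE {T}.
Arguments mf_dO {T}.

Definition base_change (S T : comNzRingType) (phi : S -> T) (M : mf S) : mf T :=
  @MF T (mf_ev M) (mf_od M) (fun j i => phi (mf_dE M j i)) (fun j i => phi (mf_dO M j i)).

Definition mor_base_change (S T : comNzRingType) (phi : S -> T) (M M' : mf S)
  (f : mor M M') : mor (base_change phi M) (base_change phi M') :=
  @Mor T (base_change phi M) (base_change phi M')
       (fun j i => phi (morE f j i)) (fun j i => phi (morO f j i)).

Definition R := {mpoly rat[8]}.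
Definition xv (k : nat) : R := 'X_(inord (k.-1)).
Definition yv (k : nat) : R := 'X_(inord (k + 3)).

Definition Rp := {mpoly rat[7]}.
Definition p1 : Rp := 'X_(inord 0).
Definition p2 : Rp := 'X_(inord 1).
Definition q1 : Rp := 'X_(inord 2).
Definition q2 : Rp := 'X_(inord 3).
Definition r1 : Rp := 'X_(inord 4).
Definition r2 : Rp := 'X_(inord 5).
Definition Cp : Rp := 'X_(inord 6).

(* Iterated divided differences of w(x) = x^(2N+1).                    *)
(* wpoly N [x1;...;xk] is t |-> w(x1,...,xk,t), and                    *)
(* w N [x1;...;xn] = w(x1,...,xn).                                     *)
Definition ddiff (a : R) (p : {poly R}) : {poly R} :=
  (p - (p.[a])%:P) %/ ('X - a%:P).

Fixpoint wpoly_rev (N : nat) (xs : seq R) : {poly R} :=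
  match xs with
  | [::] => 'X ^+ (2 * N + 1)
  | a :: xs' => ddiff a (wpoly_rev N xs')
  end.

(* w(x1,...,xn) for n >= 1 *)
Definition w (N : nat) (xs : seq R) : R :=
  (wpoly_rev N (rev (take (size xs).-1 xs))).[last 0 xs].

Definition gamma_par_p : mf Rp :=
  mf22 (m22 p2 p1 (q2 * r2 + q1 * r1 * Cp) (- (q2 * r1 + q1 * r2)))
       (m22 (q1 * r2 + q2 * r1) p1 (q2 * r2 + q1 * r1 * Cp) (- p2)).

Definition gamma_vir_p : mf Rp :=
  mf22 (m22 r2 r1 (p2 * q2 + p1 * q1 * Cp) (- (p1 * q2 + p2 * q1)))
       (m22 (p1 * q2 + p2 * q1) r1 (p2 * q2 + p1 * q1 * Cp) (- r2)).

Definition saddleE : 'I_2 -> 'I_2 -> Rp := m22 0 1 (q2 ^+ 2 - q1 ^+ 2 * Cp) 0.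
Definition saddleO : 'I_2 -> 'I_2 -> Rp := m22 q2 (- q1) (q1 * Cp) (- q2).

Definition F_p : mor gamma_par_p gamma_vir_p := @Mor _ gamma_par_p gamma_vir_p saddleE saddleO.
Definition H_p : mor gamma_vir_p gamma_par_p := @Mor _ gamma_vir_p gamma_par_p saddleE saddleO.

Definition phi_vals (N : nat) (i : 'I_7) : R :=
  match val i with
  | 0 => xv 2 + xv 4
  | 1 => yv 2 + yv 4
  | 2 => xv 3 + xv 4
  | 3 => yv 3 + yv 4
  | 4 => xv 1 + xv 4
  | 5 => yv 1 + yv 4
  | _ => w N [:: xv 1; xv 2; - xv 3; xv 4] + w N [:: xv 1; - xv 1; xv 2; xv 4]
         + w N [:: xv 1; - xv 1; - xv 2; xv 4]
  end.

Definition phi_p (N : nat) (p : Rp) : R := mmap (fun c => c%:MP_[8]) (phi_vals N) p.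

Definition A_cmn (N : nat) : R :=
  - (yv 3 + yv 4) * (yv 1 + yv 2 + yv 4) - yv 1 * yv 2 + w N [:: - xv 1; xv 3]
  + (xv 2 + xv 4) * w N [:: xv 1; xv 2; - xv 3]
  - (xv 2 + xv 4) * (xv 1 + xv 4)
    * (w N [:: xv 1; - xv 1; xv 2; xv 4] + w N [:: xv 1; - xv 1; - xv 2; xv 4]).

Definition B_cmn : R := xv 1 * yv 1 + xv 2 * yv 2 + xv 3 * yv 3 - xv 4 * yv 4.

Definition K_cmn (N : nat) : mf R :=
  tens (koszul1 (xv 1 + xv 2 + xv 3 + xv 4) (A_cmn N))
       (koszul1 (yv 1 + yv 2 + yv 3 + yv 4) B_cmn).

Definition gamma_par (N : nat) : mf R := tens (K_cmn N) (base_change (phi_p N) gamma_par_p).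
Definition gamma_vir (N : nat) : mf R := tens (K_cmn N) (base_change (phi_p N) gamma_vir_p).

Definition F_saddle (N : nat) : mor (gamma_par N) (gamma_vir N) :=
  id_tens (K_cmn N) (mor_base_change (phi_p N) F_p).
Definition H_saddle (N : nat) : mor (gamma_vir N) (gamma_par N) :=
  id_tens (K_cmn N) (mor_base_change (phi_p N) H_p).

(* Main.v *)
Require Import Defs.
From mathcomp Require Import all_boot all_order all_algebra.
From mathcomp Require Import mpoly.
From mathcomp Require Import ring.
Import GRing.Theory.
Local Open Scope ring_scope.

Module Aux.
Set Implicit Arguments. Unset Strict Implicit. Unset Printing Implicit Defensive.

Section Gen.
Variable T : comNzRingType.

Definition dlt (I : finType) (c : T) : I -> I -> T := fun j i => if j == i then c else 0.

Definition nh (M : mf T) (c : T) : Prop :=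
  exists (X0 : mf_od M -> mf_ev M -> T) (X1 : mf_ev M -> mf_od M -> T),
   (forall j i, dlt c j i = mcomp (mf_dO M) X0 j i + mcomp X1 (mf_dE M) j i) /\
   (forall j i, dlt c j i = mcomp (mf_dE M) X1 j i + mcomp X0 (mf_dO M) j i).

Lemma sum_pair (I J : finType) (F : I * J -> T) :
  \sum_(p : I * J) F p = \sum_i \sum_j F (i, j).
Proof. by rewrite pair_bigA; apply: eq_bigr => -[]. Qed.

Lemma sum_at (I : finType) (a : I) (F : I -> T) :
  (forall k, a != k -> F k = 0) -> \sum_k F k = F a.
Proof.
move=> h; rewrite (bigD1 a) //= big1 ?addr0 // => k nk; apply: h; by rewrite eq_sym.
Qed.

Lemma ind_neq (I : finType) (a k : I) : a != k -> ind T a k = 0 /\ ind T k a = 0.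
Proof. by move=> h; rewrite /ind (negbTE h) eq_sym (negbTE h). Qed.

Lemma ind_eq (I : finType) (a : I) : ind T a a = 1.
Proof. by rewrite /ind eqxx. Qed.

Lemma sumDr (I : finType) (a b c : I -> T) :
  \sum_j a j * (b j + c j) = \sum_j a j * b j + \sum_j a j * c j.
Proof. by rewrite -big_split; apply: eq_bigr => *; rewrite mulrDr. Qed.
Lemma sumDl (I : finType) (a b c : I -> T) :
  \sum_j (a j + b j) * c j = \sum_j a j * c j + \sum_j b j * c j.
Proof. by rewrite -big_split; apply: eq_bigr => *; rewrite mulrDl. Qed.

Lemma dltD (I : finType) c1 c2 (j i : I) : dlt (c1 + c2) j i = dlt c1 j i + dlt c2 j i.
Proof. by rewrite /dlt; case: (j == i); rewrite ?addr0. Qed.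
Lemma dltM (I : finType) r c (j i : I) : dlt (r * c) j i = r * dlt c j i.
Proof. by rewrite /dlt; case: (j == i); rewrite ?mulr0. Qed.

Lemma nhD M c1 c2 : nh M c1 -> nh M c2 -> nh M (c1 + c2).
Proof.
move=> [X0 [X1 [h1 h2]]] [Y0 [Y1 [k1 k2]]].
exists (fun a b => X0 a b + Y0 a b), (fun a b => X1 a b + Y1 a b); split=> j i.
- rewrite dltD h1 k1 /mcomp sumDr sumDl; ring.
- rewrite dltD h2 k2 /mcomp sumDr sumDl; ring.
Qed.

Lemma nhM M r c : nh M c -> nh M (r * c).
Proof.
move=> [X0 [X1 [h1 h2]]].
exists (fun a b => r * X0 a b), (fun a b => r * X1 a b); split=> j i.
- rewrite dltM h1 /mcomp.
  have E1 : forall (I J K : finType) (g : K -> J -> T) (f : J -> I -> T) k i,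
     \sum_j g k j * (r * f j i) = r * \sum_j g k j * f j i.
    by move=> *; rewrite mulr_sumr; apply: eq_bigr => *; ring.
  have E2 : forall (I J K : finType) (g : K -> J -> T) (f : J -> I -> T) k i,
     \sum_j (r * g k j) * f j i = r * \sum_j g k j * f j i.
    by move=> *; rewrite mulr_sumr; apply: eq_bigr => *; ring.
  rewrite E1 E2; ring.
- rewrite dltM h2 /mcomp.
  have E1 : forall (I J K : finType) (g : K -> J -> T) (f : J -> I -> T) k i,
     \sum_j g k j * (r * f j i) = r * \sum_j g k j * f j i.
    by move=> *; rewrite mulr_sumr; apply: eq_bigr => *; ring.
  have E2 : forall (I J K : finType) (g : K -> J -> T) (f : J -> I -> T) k i,
     \sum_j (r * g k j) * f j i = r * \sum_j g k j * f j i.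
    by move=> *; rewrite mulr_sumr; apply: eq_bigr => *; ring.
  rewrite E1 E2; ring.
Qed.

Lemma sum2E (I J : finType) (F : I -> J -> T) (b : J) :
  (forall i j, b != j -> F i j = 0) -> \sum_i \sum_j F i j = \sum_i F i b.
Proof. by move=> h; apply: eq_bigr => i _; apply: sum_at => j /h. Qed.
Lemma sum1E (I : finType) (F : I -> T) (a : I) :
  (forall i, a != i -> F i = 0) -> \sum_i F i = F a.
Proof. exact: sum_at. Qed.

Lemma sum2E' (I J : finType) (F : I -> J -> T) (a : I) :
  (forall i j, a != i -> F i j = 0) -> \sum_i \sum_j F i j = \sum_j F a j.
Proof. by move=> h; rewrite (@sum_at _ a) // => i /h hi; apply: big1 => j _; apply: hi. Qed.
Ltac side2' := let i := fresh "i" in let j := fresh "j" in let h := fresh "h" in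
  let e1 := fresh "e" in let e2 := fresh "e" in
  move=> i j h /=; case: (ind_neq h) => e1 e2; rewrite ?e1 ?e2; ring.

Ltac side2 := let i := fresh "i" in let j := fresh "j" in let h := fresh "h" in
  let e1 := fresh "e" in let e2 := fresh "e" in
  move=> i j h /=; case: (ind_neq h) => e1 e2; rewrite ?e1 ?e2; ring.
Ltac side1 := let i := fresh "i" in let h := fresh "h" in
  let e1 := fresh "e" in let e2 := fresh "e" in
  move=> i h /=; case: (ind_neq h) => e1 e2; rewrite ?e1 ?e2; ring.

Lemma sum0E (I : finType) (F : I -> T) : (forall i, F i = 0) -> \sum_i F i = 0.
Proof. by move=> h; apply: big1 => i _; apply: h. Qed.
Ltac side0 := let i := fresh "i" in let j := fresh "j" in
  move=> i /=; first [ring | (apply: big1 => j _ /=; ring)].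
Ltac coll0 := match goal with
 | |- context [\sum_(i : ?I) @?F i] => rewrite (@sum0E I F); [| side0]
 end.

Ltac coll2 := match goal with
 | |- context [\sum_(i : ?I) \sum_(j : ?J) @?F i j] =>
     match goal with b : _ |- _ => rewrite (@sum2E I J F b); [| side2] end
 end.
Ltac coll2' := match goal with
 | |- context [\sum_(i : ?I) \sum_(j : ?J) @?F i j] =>
     match goal with b : _ |- _ => rewrite (@sum2E' I J F b); [| side2'] end
 end.
Ltac coll1 := match goal with
 | |- context [\sum_(i : ?I) @?F i] =>
     match goal with b : _ |- _ => rewrite (@sum1E I F b); [| side1] end
 end.

Ltac coll := repeat coll0; repeat coll2; repeat coll2'; repeat coll1; rewrite ?ind_eq.

Lemma dlt_prod (I J : finType) c (a i : I) (b j : J) :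
  dlt c ((a, b) : (I * J)%type) (i, j) = dlt c a i * ind T b j.
Proof.
rewrite /dlt /ind xpair_eqE; case: (a == i); case: (b == j) => /=; ring.
Qed.
Lemma dlt_inl (I J : finType) c (x y : I) : dlt c (inl x : (I + J)%type) (inl y) = dlt c x y.
Proof. by []. Qed.
Lemma dlt_inr (I J : finType) c (x y : J) : dlt c (inr x : (I + J)%type) (inr y) = dlt c x y.
Proof. by []. Qed.
Lemma dlt_lr (I J : finType) c (x : I) (y : J) : dlt c (inl x : (I + J)%type) (inr y) = 0.
Proof. by []. Qed.
Lemma dlt_rl (I J : finType) c (x : J) (y : I) : dlt c (inr x : (I + J)%type) (inl y) = 0.
Proof. by []. Qed.

Ltac fin h1 h2 := rewrite ?dlt_inl ?dlt_inr ?dlt_lr ?dlt_rl ?dlt_prod ?h1 ?h2 /mcomp ?mulrDl ?big_distrl /= ?add0r ?addr0;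
  first [ring | (congr (_ + _); apply: eq_bigr => ? _; ring)].

Definition tlX0 (M N : mf T) (X0 : mf_od M -> mf_ev M -> T) (X1 : mf_ev M -> mf_od M -> T)
  : tens_od M N -> tens_ev M N -> T :=
  fun t s => match t, s with
  | inr (a1, b0), inl (i0, j0) => X0 a1 i0 * ind T b0 j0
  | inl (a0, b1), inr (i1, j1) => X1 a0 i1 * ind T b1 j1
  | _, _ => 0 end.
Definition tlX1 (M N : mf T) (X0 : mf_od M -> mf_ev M -> T) (X1 : mf_ev M -> mf_od M -> T)
  : tens_ev M N -> tens_od M N -> T :=
  fun t s => match t, s with
  | inl (a0, b0), inr (i1, j0) => X1 a0 i1 * ind T b0 j0
  | inr (a1, b1), inl (i0, j1) => X0 a1 i0 * ind T b1 j1
  | _, _ => 0 end.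

Lemma nh_tensl M N c : nh M c -> nh (tens M N) c.
Proof.
move=> [X0 [X1 [h1 h2]]].
exists (@tlX0 M N X0 X1), (@tlX1 M N X0 X1); split;
  case=> [[a0 b0]|[a1 b1]] [[i0 j0]|[i1 j1]];
  rewrite /mcomp /= !big_sumType /= !sum_pair /=.
all: coll.
all: fin h1 h2.
Qed.

Lemma dlt_prodr (I J : finType) c (a i : I) (b j : J) :
  dlt c ((a, b) : (I * J)%type) (i, j) = ind T a i * dlt c b j.
Proof.
rewrite /dlt /ind xpair_eqE; case: (a == i); case: (b == j) => /=; ring.
Qed.

Ltac finr h1 h2 := rewrite ?dlt_inl ?dlt_inr ?dlt_lr ?dlt_rl ?dlt_prodr ?h1 ?h2 /mcomp ?mulrDr ?big_distrr /= ?add0r ?addr0;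
  first [ring | (congr (_ + _); apply: eq_bigr => ? _; ring)].

Definition trX0 (M N : mf T) (Y0 : mf_od N -> mf_ev N -> T) (Y1 : mf_ev N -> mf_od N -> T)
  : tens_od M N -> tens_ev M N -> T :=
  fun t s => match t, s with
  | inl (a0, b1), inl (i0, j0) => ind T a0 i0 * Y0 b1 j0
  | inr (a1, b0), inr (i1, j1) => - (ind T a1 i1 * Y1 b0 j1)
  | _, _ => 0 end.
Definition trX1 (M N : mf T) (Y0 : mf_od N -> mf_ev N -> T) (Y1 : mf_ev N -> mf_od N -> T)
  : tens_ev M N -> tens_od M N -> T :=
  fun t s => match t, s with
  | inl (a0, b0), inl (i0, j1) => ind T a0 i0 * Y1 b0 j1
  | inr (a1, b1), inr (i1, j0) => - (ind T a1 i1 * Y0 b1 j0)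
  | _, _ => 0 end.

Lemma nh_tensr M N c : nh N c -> nh (tens M N) c.
Proof.
move=> [X0 [X1 [h1 h2]]].
exists (@trX0 M N X0 X1), (@trX1 M N X0 X1); split;
  case=> [[a0 b0]|[a1 b1]] [[i0 j0]|[i1 j1]];
  rewrite /mcomp /= !big_sumType /= !sum_pair /=.
all: coll.
all: finr h1 h2.
Qed.

Lemma sum_unit (F : unit -> T) : \sum_(i : unit) F i = F tt.
Proof. by rewrite (@sum_at _ tt) // => -[]; rewrite eqxx. Qed.

Lemma nh_koszul_a (a b : T) : nh (koszul1 a b) a.
Proof.
exists (fun _ _ => 1), (fun _ _ => 0); split => -[] -[];
  rewrite /dlt /mcomp /= !sum_unit /=; ring.
Qed.
Lemma nh_koszul_b (a b : T) : nh (koszul1 a b) b.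
Proof.
exists (fun _ _ => 0), (fun _ _ => 1); split => -[] -[];
  rewrite /dlt /mcomp /= !sum_unit /=; ring.
Qed.

Lemma dltB (I : finType) c d (j i : I) : dlt c j i - dlt d j i = dlt (c - d) j i.
Proof. by rewrite /dlt; case: (j == i); rewrite ?subr0. Qed.

Lemma hom_of_nh (M : mf T) (f : mor M M) c d :
  (forall j i, morE f j i = dlt c j i) -> (forall j i, morO f j i = dlt c j i) ->
  nh M (c - d) -> homotopic f (mor_scal M d).
Proof.
move=> hE hO [X0 [X1 [h1 h2]]]; exists X0, X1; split => j i /=.
- by rewrite hE -h1 -dltB.
- by rewrite hO -h2 -dltB.
Qed.

Lemma comp_id_tens (M N N' : mf T) (g : mor N' N) (f : mor N N') c :
  (forall j i, mcomp (morE g) (morE f) j i = dlt c j i) ->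
  (forall j i, mcomp (morO g) (morO f) j i = dlt c j i) ->
  (forall j i, morE (mor_comp (id_tens M g) (id_tens M f)) j i = dlt c j i) /\
  (forall j i, morO (mor_comp (id_tens M g) (id_tens M f)) j i = dlt c j i).
Proof.
move=> h1 h2; split;
  case=> [[a0 b0]|[a1 b1]] [[i0 j0]|[i1 j1]];
  rewrite /= /mcomp /= ?big_sumType /= ?sum_pair /=.
all: coll.
all: rewrite ?dlt_inl ?dlt_inr ?dlt_lr ?dlt_rl ?dlt_prodr -?h1 -?h2 /mcomp ?big_distrr /= ?add0r ?addr0; try ring.
all: try (apply: eq_bigr => ? _; ring).
Qed.

End Gen.

Section BC.
Variables (S T : comNzRingType) (phi : {rmorphism S -> T}).

Lemma nh_bc (M : mf S) c : nh M c -> nh (base_change phi M) (phi c).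
Proof.
move=> [X0 [X1 [h1 h2]]].
exists (fun a b => phi (X0 a b)), (fun a b => phi (X1 a b)); split => j i /=.
- have -> : dlt (phi c) j i = phi (dlt c j i) by rewrite /dlt; case: (j == i); rewrite ?rmorph0.
  by rewrite h1 /mcomp rmorphD !rmorph_sum; congr (_ + _); apply: eq_bigr => k _; rewrite rmorphM.
- have -> : dlt (phi c) j i = phi (dlt c j i) by rewrite /dlt; case: (j == i); rewrite ?rmorph0.
  by rewrite h2 /mcomp rmorphD !rmorph_sum; congr (_ + _); apply: eq_bigr => k _; rewrite rmorphM.
Qed.

Lemma comp_bc (M M' : mf S) (g : mor M' M) (f : mor M M') c :
  (forall j i, mcomp (morE g) (morE f) j i = dlt c j i) ->
  (forall j i, mcomp (morO g) (morO f) j i = dlt c j i) ->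
  (forall j i, mcomp (morE (mor_base_change phi g)) (morE (mor_base_change phi f)) j i = dlt (phi c) j i) /\
  (forall j i, mcomp (morO (mor_base_change phi g)) (morO (mor_base_change phi f)) j i = dlt (phi c) j i).
Proof.
move=> h1 h2; split => j i /=.
- have -> : dlt (phi c) j i = phi (dlt c j i) by rewrite /dlt; case: (j == i); rewrite ?rmorph0.
  by rewrite -h1 /mcomp rmorph_sum; apply: eq_bigr => k _; rewrite rmorphM.
- have -> : dlt (phi c) j i = phi (dlt c j i) by rewrite /dlt; case: (j == i); rewrite ?rmorph0.
  by rewrite -h2 /mcomp rmorph_sum; apply: eq_bigr => k _; rewrite rmorphM.
Qed.
End BC.


Lemma ddiff_spec (a : R) (p : {poly R}) : ddiff a p * ('X - a%:P) = p - (p.[a])%:P.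
Proof.
rewrite /ddiff; apply/esym/eqP.
rewrite -(@Pdiv.IdomainMonic.dvdp_eq _ _ (monicXsubC a)) dvdp_XsubCl /root.
by rewrite !hornerE subrr.
Qed.

Lemma ddiff_uniq (a : R) (p q : {poly R}) :
  q * ('X - a%:P) = p - (p.[a])%:P -> ddiff a p = q.
Proof. by move=> h; rewrite /ddiff -h (@Pdiv.IdomainMonic.mulpK _ _ (monicXsubC a)). Qed.

Lemma ev_of (a t : R) (q r : {poly R}) : q * ('X - a%:P) = r -> q.[t] * (t - a) = r.[t].
Proof. by move=> <-; rewrite hornerM hornerXsubC. Qed.

Lemma der_of (a t : R) (q r : {poly R}) :
  q * ('X - a%:P) = r -> (q^`()).[t] * (t - a) + q.[t] = (r^`()).[t].
Proof. by move=> <-; rewrite derivM derivXsubC mulr1 hornerD hornerM hornerXsubC. Qed.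

Lemma ddiff_ev (a : R) p t : (ddiff a p).[t] * (t - a) = p.[t] - p.[a].
Proof.
rewrite (ev_of t (ddiff_spec a p)).
move: (p.[a]) => c.
by rewrite hornerD hornerN hornerC.
Qed.

Lemma ddiff_der (a : R) p t :
  ((ddiff a p)^`()).[t] * (t - a) + (ddiff a p).[t] = (p^`()).[t].
Proof.
rewrite (der_of t (ddiff_spec a p)).
move: (p.[a]) => c.
by rewrite derivB derivC subr0.
Qed.

Lemma ddiff_at (a : R) p : (ddiff a p).[a] = (p^`()).[a].
Proof.
have := ddiff_der a p a.
move: (ddiff a p) => q.
by rewrite subrr mulr0 add0r.
Qed.

Lemma map_of (f : {rmorphism R -> R}) (a : R) (q r : {poly R}) :
  q * ('X - a%:P) = r -> map_poly f q * ('X - (f a)%:P) = map_poly f r.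
Proof. by move=> <-; rewrite rmorphM /= map_polyXsubC. Qed.

Lemma ddiff_map (f : {rmorphism R -> R}) (a : R) p :
  map_poly f (ddiff a p) = ddiff (f a) (map_poly f p).
Proof.
apply/esym/ddiff_uniq.
rewrite (map_of f (ddiff_spec a p)).
rewrite rmorphB /= map_polyC horner_map.
move: (map_poly f p) (f a) => P x.
move: (P.[x]) => c.
by [].
Qed.

Lemma wE N xs : w N xs = (wpoly_rev N (rev (take (size xs).-1 xs))).[last 0 xs].
Proof. by []. Qed.
Lemma wpoly_cons N x xs : wpoly_rev N (x :: xs) = ddiff x (wpoly_rev N xs).
Proof. by []. Qed.
Lemma wpoly_nil N : wpoly_rev N [::] = 'X^(2 * N + 1).
Proof. by []. Qed.

Lemma w4E N (a b c d : R) :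
  w N [:: a; b; c; d] = (ddiff c (ddiff b (ddiff a 'X^(2 * N + 1)))).[d].
Proof.
rewrite wE.
have -> : rev (take (size [:: a; b; c; d]).-1 [:: a; b; c; d]) = [:: c; b; a] by [].
have -> : last 0 [:: a; b; c; d] = d by [].
by rewrite !wpoly_cons wpoly_nil.
Qed.
Lemma w2E N (a b : R) :
  w N [:: a; b] = (ddiff a 'X^(2 * N + 1)).[b].
Proof.
rewrite wE.
have -> : rev (take (size [:: a; b]).-1 [:: a; b]) = [:: a] by [].
have -> : last 0 [:: a; b] = b by [].
by rewrite !wpoly_cons wpoly_nil.
Qed.

Lemma w4_map (f : {rmorphism R -> R}) N (a b c d : R) :
  f (w N [:: a; b; c; d]) = w N [:: f a; f b; f c; f d].
Proof. by rewrite !w4E -horner_map !ddiff_map map_polyXn. Qed.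
Lemma w2_map (f : {rmorphism R -> R}) N (a b : R) :
  f (w N [:: a; b]) = w N [:: f a; f b].
Proof. by rewrite !w2E -horner_map !ddiff_map map_polyXn. Qed.

Fact ddo_key : unit. Proof. by []. Qed.
Definition ddo : R -> {poly R} -> {poly R} := locked_with ddo_key ddiff.
Lemma ddoE : ddo = ddiff. Proof. exact: unlock. Qed.

Lemma ddo_ev (a : R) p t : (ddo a p).[t] * (t - a) = p.[t] - p.[a].
Proof. by rewrite ddoE ddiff_ev. Qed.
Lemma ddo_der (a : R) p t :
  ((ddo a p)^`()).[t] * (t - a) + (ddo a p).[t] = (p^`()).[t].
Proof. by rewrite ddoE ddiff_der. Qed.
Lemma ddo_at (a : R) p : (ddo a p).[a] = (p^`()).[a].
Proof. by rewrite ddoE ddiff_at. Qed.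

Lemma w4D N (a b c d : R) :
  w N [:: a; b; c; d] = (ddo c (ddo b (ddo a 'X^(2 * N + 1)))).[d].
Proof. by rewrite w4E ddoE. Qed.
Lemma w2D N (a b : R) :
  w N [:: a; b] = (ddo a 'X^(2 * N + 1)).[b].
Proof. by rewrite w2E ddoE. Qed.


Lemma solve (K : fieldType) (x c r : K) : c != 0 -> x * c = r -> x = r / c.
Proof. by move=> hc <-; rewrite mulfK. Qed.

Lemma key_field (K : fieldType) (a b E F n G1b G1m G1a G1ma g2b g2a T1 g2pb g2pm T2 T3 g1pm S : K) :
 a != 0 -> b != 0 -> a - b != 0 -> a + b != 0 -> (2:K) != 0 ->
 G1b * (b - a) = b * F - a * E ->
 G1m * (- b - a) = - (b * F) - a * E ->
 G1a = n * E ->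
 G1ma * (- a - a) = - (a * E) - a * E ->
 g2b * (- b - b) = G1m - G1b ->
 g2a * (a - b) = G1a - G1b ->
 T1 * (- b - a) = g2b - g2a ->
 g2pb * (b - - a) = G1b - G1ma ->
 g2pm * (- b - - a) = G1m - G1ma ->
 T2 * (- b - b) = g2pm - g2pb ->
 T3 * (- b - - a) + g2pm = g1pm ->
 g1pm * (- b - a) + G1m = n * F ->
 S * (b - a) = b * F - a * E ->
 b * (a + b) * (T1 + T2 + T3) = n * S - n * E.
Proof.
move=> ha hb hab hapb h2 e1 e2 e3 e4 e5 e6 e7 e8 e9 e10 e11 e12 e13.
have nba : b - a != 0 by rewrite -opprB oppr_eq0.
have nmba : - b - a != 0 by rewrite -opprD oppr_eq0 addrC.
have nmaa : - a - a != 0 by rewrite -opprD oppr_eq0 -mulr2n -mulr_natr mulf_neq0.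
have nmbb : - b - b != 0 by rewrite -opprD oppr_eq0 -mulr2n -mulr_natr mulf_neq0.
have nbpa : b - - a != 0 by rewrite opprK addrC.
have nmbpa : - b - - a != 0 by rewrite opprK addrC.
move: e11 => /(canRL (addrK _)) /(solve nmbpa) e11.
rewrite e11 (solve nmbb e10) (solve nmba e7).
move: e12 => /(canRL (addrK _)) /(solve nmba) e12.
rewrite e12 (solve nmbpa e9) (solve nbpa e8) (solve nmbb e5) (solve hab e6).
rewrite (solve nmaa e4) (solve nba e1) (solve nmba e2) (solve nba e13) e3.
field.
by rewrite nba nmbpa nmaa nmba nmbb nbpa.
Qed.

Local Notation "x %:F" := (@tofrac _ x).

Lemma key_dom (K : idomainType) (a b E F n G1b G1m G1a G1ma g2b g2a T1 g2pb g2pm T2 T3 g1pm S : K) :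
 a != 0 -> b != 0 -> a - b != 0 -> a + b != 0 -> (2:K) != 0 ->
 G1b * (b - a) = b * F - a * E ->
 G1m * (- b - a) = - (b * F) - a * E ->
 G1a = n * E ->
 G1ma * (- a - a) = - (a * E) - a * E ->
 g2b * (- b - b) = G1m - G1b ->
 g2a * (a - b) = G1a - G1b ->
 T1 * (- b - a) = g2b - g2a ->
 g2pb * (b - - a) = G1b - G1ma ->
 g2pm * (- b - - a) = G1m - G1ma ->
 T2 * (- b - b) = g2pm - g2pb ->
 T3 * (- b - - a) + g2pm = g1pm ->
 g1pm * (- b - a) + G1m = n * F ->
 S * (b - a) = b * F - a * E ->
 b * (a + b) * (T1 + T2 + T3) = n * S - n * E.
Proof.
move=> ha hb hab hapb h2 e1 e2 e3 e4 e5 e6 e7 e8 e9 e10 e11 e12 e13.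
apply/eqP; rewrite -tofrac_eq; apply/eqP.
have nz (x : K) : x != 0 -> x%:F != 0 by rewrite tofrac_eq0.
have h2' : (2 : {fraction K}) != 0.
  by have := nz _ h2; rewrite rmorph_nat.
have f1 := congr1 (@tofrac K) e1.
have f2 := congr1 (@tofrac K) e2.
have f3 := congr1 (@tofrac K) e3.
have f4 := congr1 (@tofrac K) e4.
have f5 := congr1 (@tofrac K) e5.
have f6 := congr1 (@tofrac K) e6.
have f7 := congr1 (@tofrac K) e7.
have f8 := congr1 (@tofrac K) e8.
have f9 := congr1 (@tofrac K) e9.
have f10 := congr1 (@tofrac K) e10.
have f11 := congr1 (@tofrac K) e11.
have f12 := congr1 (@tofrac K) e12.
have f13 := congr1 (@tofrac K) e13.
rewrite !(rmorphM, rmorphB, rmorphD, rmorphN) /= in f1 f2 f3 f4 f5 f6 f7 f8 f9 f10 f11 f12 f13.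
rewrite !(rmorphM, rmorphB, rmorphD, rmorphN) /=.
apply: key_field f1 f2 f3 f4 f5 f6 f7 f8 f9 f10 f11 f12 f13 => //; try exact: nz.
- by have := nz _ hab; rewrite rmorphB.
- by have := nz _ hapb; rewrite rmorphD.
Qed.


Lemma key_R N (a b : R) : a != 0 -> b != 0 -> a - b != 0 -> a + b != 0 -> (2 : R) != 0 ->
 b * (a + b) * (w N [:: a; b; a; -b] + w N [:: a; -a; b; -b] + w N [:: a; -a; -b; -b])
 = (2 * N + 1)%:R * (\sum_(i < (2 * N).+1) a ^+ i * b ^+ (2 * N - i)) - w N [:: -a; -a].
Proof.
move=> ha hb hab hapb h2.
rewrite !w4D w2D.
set Xn := 'X^(2 * N + 1) : {poly R}.
set g1 := ddo a Xn. set g2 := ddo b g1. set g2p := ddo (-a) g1.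
have hX t : Xn.[t] = t * t ^+ (2 * N) by rewrite hornerXn addn1 exprS.
have hXd t : (Xn^`()).[t] = (2 * N + 1)%:R * t ^+ (2 * N).
  by rewrite derivXn hornerMn hornerXn -mulr_natl addn1.
have hN t : (- t) ^+ (2 * N) = t ^+ (2 * N) by rewrite !exprM sqrrN.
rewrite (ddo_at (-a) Xn) hXd hN.
apply: (@key_dom R a b (a ^+ (2 * N)) (b ^+ (2 * N)) (2 * N + 1)%:R
   g1.[b] g1.[-b] g1.[a] g1.[-a] g2.[-b] g2.[a] _ g2p.[b] g2p.[-b] _ _
   (g1^`()).[-b]) => //.
- by rewrite ddo_ev !hX.
- by rewrite ddo_ev !hX hN mulNr.
- by rewrite ddo_at hXd.
- by rewrite ddo_ev !hX hN mulNr.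
- by rewrite ddo_ev.
- by rewrite ddo_ev.
- by rewrite ddo_ev.
- by rewrite ddo_ev.
- by rewrite ddo_ev.
- by rewrite ddo_ev.
- by rewrite ddo_at ddo_der.
- by rewrite ddo_der hXd hN.
- rewrite mulrC -!exprS -(addn1 (2 * N)) subrXX addn1 /=.
  congr (_ * _); apply: eq_bigr => i _; by rewrite mulrC.
Qed.


Ltac ent := let h := fresh "h" in let h' := fresh "h" in
  case=> [[|[|//]] h]; case=> [[|[|//]] h'];
  rewrite /dlt /mcomp /=; rewrite !big_ord_recl !big_ord0 /m22 /=; ring.

Lemma nh_gp_p1 : nh gamma_par_p p1.
Proof.
exists (m22 0 0 1 0), (m22 0 0 1 0); split; ent.
Qed.
Lemma nh_gp_p2 : nh gamma_par_p p2.
Proof.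
exists (m22 1 0 0 0), (m22 0 0 0 (-1)); split; ent.
Qed.
Lemma nh_gp_al : nh gamma_par_p (q2 * r2 + q1 * r1 * Cp).
Proof.
exists (m22 0 1 0 0), (m22 0 1 0 0); split; ent.
Qed.
Lemma saddle_compE : forall j i, mcomp saddleE saddleE j i = dlt (q2 ^+ 2 - q1 ^+ 2 * Cp) j i.
Proof. rewrite /saddleE; ent. Qed.
Lemma saddle_compO : forall j i, mcomp saddleO saddleO j i = dlt (q2 ^+ 2 - q1 ^+ 2 * Cp) j i.
Proof. rewrite /saddleO; ent. Qed.


Fact wo_key : unit. Proof. by []. Qed.
Definition wo : nat -> seq R -> R := locked_with wo_key w.
Lemma woE : wo = w. Proof. exact: unlock. Qed.

Lemma wo4_map (f : {rmorphism R -> R}) N (a b c d : R) :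
  f (wo N [:: a; b; c; d]) = wo N [:: f a; f b; f c; f d].
Proof. by rewrite woE w4_map. Qed.
Lemma wo2_map (f : {rmorphism R -> R}) N (a b : R) :
  f (wo N [:: a; b]) = wo N [:: f a; f b].
Proof. by rewrite woE w2_map. Qed.
Lemma key_Ro N (a b : R) : a != 0 -> b != 0 -> a - b != 0 -> a + b != 0 -> (2 : R) != 0 ->
 b * (a + b) * (wo N [:: a; b; a; -b] + wo N [:: a; -a; b; -b] + wo N [:: a; -a; -b; -b])
 = (2 * N + 1)%:R * (\sum_(i < (2 * N).+1) a ^+ i * b ^+ (2 * N - i)) - wo N [:: -a; -a].
Proof. by rewrite woE; apply: key_R. Qed.

Lemma val_inord7 k : (k < 7)%N -> val (inord k : 'I_7) = k.
Proof. exact: inordK. Qed.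

Definition phiR N : {rmorphism Rp -> R} := phi_p N.
Lemma phiE N x : phiR N x = phi_p N x. Proof. by []. Qed.
Lemma phiX N (i : 'I_7) : phi_p N 'X_i = phi_vals N i.
Proof. by rewrite /phi_p mmapX mmap1U. Qed.
Lemma phi_p1 N : phi_p N p1 = xv 2 + xv 4. Proof. by rewrite /p1 phiX /phi_vals val_inord7. Qed.
Lemma phi_p2 N : phi_p N p2 = yv 2 + yv 4. Proof. by rewrite /p2 phiX /phi_vals val_inord7. Qed.
Lemma phi_q1 N : phi_p N q1 = xv 3 + xv 4. Proof. by rewrite /q1 phiX /phi_vals val_inord7. Qed.
Lemma phi_q2 N : phi_p N q2 = yv 3 + yv 4. Proof. by rewrite /q2 phiX /phi_vals val_inord7. Qed.
Lemma phi_r1 N : phi_p N r1 = xv 1 + xv 4. Proof. by rewrite /r1 phiX /phi_vals val_inord7. Qed.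
Lemma phi_r2 N : phi_p N r2 = yv 1 + yv 4. Proof. by rewrite /r2 phiX /phi_vals val_inord7. Qed.
Lemma phi_C N : phi_p N Cp = wo N [:: xv 1; xv 2; - xv 3; xv 4] + wo N [:: xv 1; - xv 1; xv 2; xv 4]
         + wo N [:: xv 1; - xv 1; - xv 2; xv 4].
Proof. by rewrite woE /Cp phiX /phi_vals val_inord7. Qed.

Definition J N c := nh (gamma_par N) c.
Lemma J_add N a b : J N a -> J N b -> J N (a + b). Proof. exact: nhD. Qed.
Lemma J_mul N r a : J N a -> J N (r * a). Proof. exact: nhM. Qed.
Lemma J_opp N a : J N a -> J N (- a).
Proof. by move=> h; rewrite -mulN1r; apply: J_mul. Qed.
Lemma J_sub N a b : J N a -> J N b -> J N (a - b).
Proof. by move=> ha hb; apply: J_add => //; apply: J_opp. Qed.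

Lemma J_l1 N : J N (xv 1 + xv 2 + xv 3 + xv 4).
Proof. by apply: nh_tensl; apply: nh_tensl; apply: nh_koszul_a. Qed.
Lemma J_A N : J N (A_cmn N).
Proof. by apply: nh_tensl; apply: nh_tensl; apply: nh_koszul_b. Qed.
Lemma J_l2 N : J N (yv 1 + yv 2 + yv 3 + yv 4).
Proof. by apply: nh_tensl; apply: nh_tensr; apply: nh_koszul_a. Qed.
Lemma J_phi N c : nh gamma_par_p c -> J N (phi_p N c).
Proof. by move=> h; apply: nh_tensr; exact: (nh_bc (phiR N) h). Qed.
Lemma J0 N : J N 0.
Proof. by have := J_mul 0 (J_l1 N); rewrite mul0r. Qed.

Lemma J_x24 N : J N (xv 2 + xv 4). Proof. by rewrite -(phi_p1 N); apply: J_phi; apply: nh_gp_p1. Qed.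
Lemma J_y24 N : J N (yv 2 + yv 4). Proof. by rewrite -(phi_p2 N); apply: J_phi; apply: nh_gp_p2. Qed.
Lemma J_Q7 N : J N (phi_p N (q2 * r2 + q1 * r1 * Cp)). Proof. by apply: J_phi; apply: nh_gp_al. Qed.

Lemma comp_dlt N :
  (forall j i, morE (mor_comp (H_saddle N) (F_saddle N)) j i = dlt (phi_p N (q2 ^+ 2 - q1 ^+ 2 * Cp)) j i) /\
  (forall j i, morO (mor_comp (H_saddle N) (F_saddle N)) j i = dlt (phi_p N (q2 ^+ 2 - q1 ^+ 2 * Cp)) j i).
Proof.
have [h1 h2] := comp_bc (phiR N) (g:=H_p) (f:=F_p) saddle_compE saddle_compO.
exact: comp_id_tens h1 h2.
Qed.

Definition sv (i : 'I_8) : R :=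
  match val i with 2 => - xv 1 | 3 => - xv 2 | 6 => - yv 1 | 7 => - yv 2 | _ => 'X_i end.
Definition sigR : {rmorphism R -> R} := mmap (fun c => c%:MP_[8]) sv.
Lemma sigE x : sigR x = mmap (fun c => c%:MP_[8]) sv x. Proof. by []. Qed.
Lemma val_inord8 k : (k < 8)%N -> val (inord k : 'I_8) = k.
Proof. exact: inordK. Qed.

Lemma sig_x1 : sigR (xv 1) = xv 1. Proof. by rewrite sigE /xv mmapX mmap1U /sv val_inord8. Qed.
Lemma sig_x2 : sigR (xv 2) = xv 2. Proof. by rewrite sigE /xv mmapX mmap1U /sv val_inord8. Qed.
Lemma sig_x3 : sigR (xv 3) = - xv 1. Proof. by rewrite sigE {1}/xv mmapX mmap1U /sv val_inord8. Qed.
Lemma sig_x4 : sigR (xv 4) = - xv 2. Proof. by rewrite sigE {1}/xv mmapX mmap1U /sv val_inord8. Qed.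
Lemma sig_y1 : sigR (yv 1) = yv 1. Proof. by rewrite sigE /yv mmapX mmap1U /sv val_inord8. Qed.
Lemma sig_y2 : sigR (yv 2) = yv 2. Proof. by rewrite sigE /yv mmapX mmap1U /sv val_inord8. Qed.
Lemma sig_y3 : sigR (yv 3) = - yv 1. Proof. by rewrite sigE {1}/yv mmapX mmap1U /sv val_inord8. Qed.
Lemma sig_y4 : sigR (yv 4) = - yv 2. Proof. by rewrite sigE {1}/yv mmapX mmap1U /sv val_inord8. Qed.

Lemma ordE (k : nat) (h : (k < 8)%N) : Ordinal h = inord k.
Proof. by apply: val_inj; rewrite /= inordK. Qed.

Lemma J_gen N (i : 'I_8) : J N ('X_i - sv i).
Proof.
case: i => [[|[|[|[|[|[|[|[|//]]]]]]]] h]; rewrite /sv /=; rewrite ?subrr; try exact: J0.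
- have -> : 'X_(Ordinal h) = xv 3 by rewrite /xv ordE.
  have -> : xv 3 - - xv 1 = (xv 1 + xv 2 + xv 3 + xv 4) - (xv 2 + xv 4) by ring.
  by apply: J_sub; [apply: J_l1 | apply: J_x24].
- have -> : 'X_(Ordinal h) = xv 4 by rewrite /xv ordE.
  have -> : xv 4 - - xv 2 = xv 2 + xv 4 by ring.
  exact: J_x24.
- have -> : 'X_(Ordinal h) = yv 3 by rewrite /yv ordE.
  have -> : yv 3 - - yv 1 = (yv 1 + yv 2 + yv 3 + yv 4) - (yv 2 + yv 4) by ring.
  by apply: J_sub; [apply: J_l2 | apply: J_y24].
- have -> : 'X_(Ordinal h) = yv 4 by rewrite /yv ordE.
  have -> : yv 4 - - yv 2 = yv 2 + yv 4 by ring.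
  exact: J_y24.
Qed.

Lemma J_pow N (x y : R) k : J N (x - y) -> J N (x ^+ k - y ^+ k).
Proof.
move=> h; elim: k => [|k ih]; first by rewrite !expr0 subrr; apply: J0.
have -> : x ^+ k.+1 - y ^+ k.+1 = x * (x ^+ k - y ^+ k) + y ^+ k * (x - y)
  by rewrite !exprS; ring.
by apply: J_add; apply: J_mul.
Qed.

Lemma J_monom N (m : 'X_{1..8}) : J N ('X_[m] - mmap1 sv m).
Proof.
rewrite mpolyXE_id /mmap1.
elim/big_rec2: _ => [|i y x _ hxy]; first by rewrite subrr; apply: J0.
have -> : 'X_i ^+ m i * x - sv i ^+ m i * y
   = 'X_i ^+ m i * (x - y) + y * ('X_i ^+ m i - sv i ^+ m i) by ring.
apply: J_add; apply: J_mul => //.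
by apply: J_pow; apply: J_gen.
Qed.

Lemma J_sig N (P : R) : J N (P - sigR P).
Proof.
elim/mpolyind: P => [|c m p _ _ ih]; first by rewrite rmorph0 subrr; apply: J0.
rewrite sigE mmapD mmapZ mmapX -sigE -mul_mpolyC.
have -> : c%:MP * 'X_[m] + p - (c%:MP_[8] * mmap1 sv m + sigR p)
   = c%:MP * ('X_[m] - mmap1 sv m) + (p - sigR p) by ring.
by apply: J_add => //; apply: J_mul; apply: J_monom.
Qed.

Lemma phi_cP N : phi_p N (q2 ^+ 2 - q1 ^+ 2 * Cp)
  = (yv 3 + yv 4) ^+ 2 - (xv 3 + xv 4) ^+ 2 *
     (wo N [:: xv 1; xv 2; - xv 3; xv 4] + wo N [:: xv 1; - xv 1; xv 2; xv 4]
         + wo N [:: xv 1; - xv 1; - xv 2; xv 4]).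
Proof. rewrite -phiE !(rmorphB, rmorphM) !phiE phi_q2 phi_q1 phi_C; ring. Qed.

Lemma phi_al N : phi_p N (q2 * r2 + q1 * r1 * Cp)
  = (yv 3 + yv 4) * (yv 1 + yv 4) + (xv 3 + xv 4) * (xv 1 + xv 4) *
     (wo N [:: xv 1; xv 2; - xv 3; xv 4] + wo N [:: xv 1; - xv 1; xv 2; xv 4]
         + wo N [:: xv 1; - xv 1; - xv 2; xv 4]).
Proof. by rewrite -phiE rmorphD !rmorphM !phiE phi_q2 phi_q1 phi_r1 phi_r2 phi_C. Qed.

Lemma sig_S N : sigR (\sum_(i < (2 * N).+1) xv 1 ^+ i * xv 2 ^+ (2 * N - i))
   = \sum_(i < (2 * N).+1) xv 1 ^+ i * xv 2 ^+ (2 * N - i).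
Proof. by rewrite rmorph_sum; apply: eq_bigr => i _; rewrite rmorphM !rmorphXn sig_x1 sig_x2. Qed.

Lemma sig_A N : sigR (A_cmn N) = yv 1 ^+ 2 + wo N [:: - xv 1; - xv 1].
Proof.
rewrite /A_cmn -woE.
rewrite !(rmorphD, rmorphB, rmorphM, rmorphN) wo2_map.
rewrite !(rmorphD, rmorphB, rmorphM, rmorphN).
rewrite !wo4_map !(rmorphN, sig_x1, sig_x2, sig_x3, sig_x4, sig_y1, sig_y2, sig_y3, sig_y4) ?opprK.
ring.
Qed.

Definition vv (i : 'I_8) : rat := (val i)%:R + 1.
Lemma nzR (p : R) : meval vv p != 0 -> p != 0.
Proof. by move=> h; apply/eqP => e; move: h; rewrite e meval0 eqxx. Qed.
Lemma mev_x1 : meval vv (xv 1) = 1.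
Proof. by rewrite /xv mevalXU /vv val_inord8. Qed.
Lemma mev_x2 : meval vv (xv 2) = 2.
Proof. by rewrite /xv mevalXU /vv val_inord8. Qed.

Lemma nz_facts : [/\ xv 1 != 0, xv 2 != 0, xv 1 - xv 2 != 0, xv 1 + xv 2 != 0 & (2 : R) != 0].
Proof.
split; apply: nzR; rewrite ?mevalB ?mevalD ?mevalMn ?meval1 ?mev_x1 ?mev_x2 //.
Qed.

Definition tgt N : R := 2 * yv 1 * yv 2
        - 2 * (2 * N + 1)%:R * \sum_(i < (2 * N).+1) xv 1 ^+ i * xv 2 ^+ (2 * N - i).

Lemma sig_t N : sigR (tgt N) = tgt N.
Proof.
rewrite /tgt !(rmorphB, rmorphM, rmorph_nat) sig_S sig_y1 sig_y2.
by [].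
Qed.

Lemma ident N : sigR (phi_p N (q2 ^+ 2 - q1 ^+ 2 * Cp)) - tgt N
   = 2 * sigR (A_cmn N) + sigR (phi_p N (q2 * r2 + q1 * r1 * Cp)).
Proof.
rewrite sig_A phi_cP phi_al.
rewrite !(rmorphD, rmorphB, rmorphM, rmorphN).
rewrite !wo4_map !(rmorphN, sig_x1, sig_x2, sig_x3, sig_x4, sig_y1, sig_y2, sig_y3, sig_y4) ?opprK.
have [ha hb hab hapb h2] := nz_facts.
have K := key_Ro N ha hb hab hapb h2.
set a := xv 1 in K *. set b := xv 2 in K *.
set W := (wo N [:: a; b; a; - b] + wo N [:: a; - a; b; - b] + wo N [:: a; - a; - b; - b]) in K *.
set S := \sum_(i < (2 * N).+1) a ^+ i * b ^+ (2 * N - i) in K *.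
have Kw : wo N [:: - a; - a] = (2 * N + 1)%:R * S - b * (a + b) * W by rewrite K; ring.
rewrite Kw /tgt -/S /W; ring.
Qed.

Lemma decomp (x sx a sa q sq : R) :
  sx = 2 * sa + sq -> x = (x - sx) + 2 * a - 2 * (a - sa) + q - (q - sq).
Proof. by move=> ->; ring. Qed.


End Aux.
Import Aux.
Unset Implicit Arguments. Set Strict Implicit. Set Printing Implicit Defensive.

Theorem mainTheorem3 (N : nat) (hN : (1 <= N)%N) :
  homotopic (mor_comp (H_saddle N) (F_saddle N))
    (mor_scal (gamma_par N)
       (2 * yv 1 * yv 2
        - 2 * (2 * N + 1)%:R * \sum_(i < (2 * N).+1) xv 1 ^+ i * xv 2 ^+ (2 * N - i))).
Proof.
have [hE hO] := comp_dlt N.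
apply: (hom_of_nh hE hO).
rewrite -/(tgt N).
have e : sigR (phi_p N (q2 ^+ 2 - q1 ^+ 2 * Cp) - tgt N)
   = 2 * sigR (A_cmn N) + sigR (phi_p N (q2 * r2 + q1 * r1 * Cp)).
  by rewrite rmorphB sig_t ident.
rewrite (decomp (phi_p N (q2 ^+ 2 - q1 ^+ 2 * Cp) - tgt N) (A_cmn N)
            (phi_p N (q2 * r2 + q1 * r1 * Cp)) e).
apply: J_sub; last exact: J_sig.
apply: J_add; last exact: J_Q7.
apply: J_sub; last by apply: J_mul; apply: J_sig.
apply: J_add; last by apply: J_mul; apply: J_A.
exact: J_sig.
Qed.
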